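(* Let $G$ be a finite two-player zero-sum extensive form game with perfect recall, and let $\boldsymbol\sigma^0,\boldsymbol\sigma^1,\dots$ be the strategy profiles generated by CFR$^+$ with alternating updates, so that Player 1's regret-like values are updated using $\boldsymbol{v}^{(\sigma^t_1,\sigma^t_2)}$ and Player 2's using $\boldsymbol{v}^{(\sigma^{t+1}_1,\sigma^t_2)}$. Let $l:=\max_{y,z\in Z}(u_1(y)-u_1(z))$, let $k:=\max_I|A(I)|$, and let $|\mathcal{I}|$ be the total number of information sets of Players 1 and 2. Then for every $t\ge1$, the exploitability of the weighted average profile $$\Bigl(\tfrac{2}{t^2+t}\textstyle\sum_{i=1}^{t}i\,\sigma^i_1,\ \tfrac{2}{t^2+t}\sum_{i=0}^{t-1}(i+1)\,\sigma^i_2\Bigr)$$ is at most $2|\mathcal{I}|\,l\sqrt{k/t}$.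
   Context: Extensive form game: a finite tree of histories $h$ (sequences of actions from the root), terminal histories $Z$, actions $A(h)$ at nonterminal $h$, an acting player $P(h)\in\{1,2,c\}$ where $c$ is chance acting with fixed probabilities, utilities $u_1(z)=-u_2(z)$ at terminals, and for each player a partition of that player's histories into information sets $I$ (all $h\in I$ share the same legal actions $A(I)$); perfect recall as usual. A strategy $\sigma_p$ gives a distribution $\boldsymbol{\sigma}_p(I)$ over $A(I)$ at each player-$p$ information set; $u^{\boldsymbol\sigma}_p$ is player $p$'s expected utility. For a profile $\boldsymbol{\sigma}$ and terminal $z$, $\pi^{\boldsymbol\sigma}_{-p}(z)$ is the product of probabilities of chance's and the opponent's actions on the path to $z$; for $h\sqsubseteq z$, $\pi^{\boldsymbol\sigma}_p(z\mid h)$ is the product of probabilities under $\sigma_p$ of $p$'s actions from $h$ to $z$. Counterfactual values: $v^{\boldsymbol\sigma}_p(h):=\sum_{z\in Z,\,h\sqsubseteq z}\pi^{\boldsymbol\sigma}_{-p}(z)\pi^{\boldsymbol\sigma}_p(z\mid h)u_p(z)$ and, for an information set $I$ of player $p$, $v^{\boldsymbol\sigma}(I)_a:=\sum_{h\in I}v^{\boldsymbol\sigma}_p(ha)$. With $x^+=\max(x,0)$ componentwise and $\boldsymbol{\sigma}_{\mathrm{rm}}(\boldsymbol{x}):=\boldsymbol{x}^+/(\boldsymbol{1}\cdot\boldsymbol{x}^+)$ if some $x_a>0$, else the uniform distribution, CFR$^+$ with alternating updates keeps $\boldsymbol{q}^t(I)$ for each information set, with $\boldsymbol{q}^0(I)=\boldsymbol0$,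 plays $\boldsymbol\sigma^t(I)=\boldsymbol{\sigma}_{\mathrm{rm}}(\boldsymbol{q}^t(I))$, and sets $\boldsymbol{q}^{t+1}(I)=(\boldsymbol{q}^t(I)+\boldsymbol{v}^t(I)-(\boldsymbol\sigma^t(I)\cdot\boldsymbol{v}^t(I))\boldsymbol1)^+$, where $\boldsymbol{v}^t(I)=\boldsymbol{v}^{(\sigma^t_1,\sigma^t_2)}(I)$ for Player-1 information sets and $\boldsymbol{v}^t(I)=\boldsymbol{v}^{(\sigma^{t+1}_1,\sigma^t_2)}(I)$ for Player-2 information sets. A weighted average $\sum_i w_i\sigma^i_p$ (weights summing to 1) denotes the strategy of player $p$ whose reach probabilities of every history are the corresponding weighted average of the reach probabilities of the $\sigma^i_p$ (equivalently, the mixture with weights $w_i$). Exploitability: $\mathrm{expl}(\sigma_1,\sigma_2):=\max_{\sigma^*_1}u_1^{(\sigma^*_1,\sigma_2)}+\max_{\sigma^*_2}u_2^{(\sigma_1,\sigma^*_2)}$. *)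

(* Defs.v *)
From HB Require Import structures.
From mathcomp Require Import all_boot all_order all_algebra.
From Stdlib Require List.
From mathcomp Require Import boolp classical_sets reals.

Set Implicit Arguments.
Unset Strict Implicit.
Unset Printing Implicit Defensive.

Import Order.TTheory GRing.Theory Num.Theory.
Local Open Scope ring_scope.

(*  - [Leaf u]         : terminal history z with u_1(z) = u (u_2 = -u). *)
(*  - [Chance ps ch]   : chance node; child c is reached w.p. ps`_c.    *)
(*  - [Node b lbl ch]    : decision node of player 1 (b = true) or        *)
(*                       player 2 (b = false), belonging to the         *)
(*                       information set labelled lbl of that player;     *)
(*                       the actions are 0, ..., size ch - 1 and        *)
(*                       action c leads to child ch`_c.                 *)
(* An information set is thus identified by a pair (b, lbl).             *)
Inductive tree (R : Type) : Type :=
| Leaf of R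
| Chance of seq R & seq (tree R)
| Node of bool & nat & seq (tree R).
Arguments Leaf {R}.
Arguments Chance {R}.
Arguments Node {R}.

(* behavioural strategy of one player: information-set label -> action -> prob *)
Definition strat (R : Type) := nat -> nat -> R.

(* all histories of the tree, each with its path from the root:        *)
(* the list of (acting player, information set, action taken) at the  *)
(* decision nodes strictly above it (root first; chance moves omitted) *)
Fixpoint nodes (R : Type) (t : tree R) : seq (seq (bool * nat * nat) * tree R) :=
  ([::], t) ::
  match t with
  | Leaf _ => [::]
  | Chance _ ch =>
      (fix go (l : seq (tree R)) :=
         match l with [::] => [::] | t' :: l' => nodes t' ++ go l' end) ch
  | Node b lbl ch =>
      (fix go (l : seq (tree R)) (c : nat) :=
         match l with
         | [::] => [::]
         | t' :: l' => [seq ((b, lbl, c) :: x.1, x.2) | x <- nodes t'] ++ go l' c.+1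
         end) ch 0%N
  end.

Definition dec_info (R : Type) (t : tree R) : option (bool * nat * nat) :=
  match t with Node b lbl ch => Some (b, lbl, size ch) | _ => None end.

Definition decs (R : Type) (g : tree R) : seq (bool * nat * nat) :=
  pmap (fun x => dec_info x.2) (nodes g).

Definition infosets (R : Type) (g : tree R) : seq (bool * nat) :=
  undup [seq x.1 | x <- decs g].

Definition arity (R : Type) (g : tree R) (b : bool) (lbl : nat) : nat :=
  head 0%N [seq x.2 | x <- decs g & x.1 == (b, lbl)].

Definition max_actions (R : Type) (g : tree R) : nat :=
  \max_(x <- decs g) x.2.

Definition leaf_utils (R : Type) (g : tree R) : seq R :=
  pmap (fun x => match x.2 with Leaf u => Some u | _ => None end) (nodes g).

(* l = max_{y,z in Z} (u_1(y) - u_1(z))  (the pair y = z gives 0, so the  *)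
(* neutral element 0 of the iterated max does not change the value)       *)
Definition util_range (R : realType) (g : tree R) : R :=
  \big[Num.max/0]_(y <- leaf_utils g) \big[Num.max/0]_(z <- leaf_utils g) (y - z).

Definition wf_game (R : realType) (g : tree R) : Prop :=
  (forall x, Stdlib.Lists.List.In x (nodes g) -> forall ps ch, x.2 = Chance ps ch ->
      [/\ size ps = size ch, (0 < size ch)%N, all (fun p => 0 <= p) ps
        & \sum_(p <- ps) p = 1])
  /\ (forall x, Stdlib.Lists.List.In x (nodes g) -> forall b lbl ch, x.2 = Node b lbl ch ->
        (0 < size ch)%N)
  /\ (forall x y, Stdlib.Lists.List.In x (nodes g) -> Stdlib.Lists.List.In y (nodes g) ->
        forall b lbl ch ch', x.2 = Node b lbl ch -> y.2 = Node b lbl ch' ->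
        size ch = size ch')
  (* perfect recall: histories of one information set of player b have *)
  (* the same sequence of player-b information sets and actions        *)
  /\ (forall x y, Stdlib.Lists.List.In x (nodes g) -> Stdlib.Lists.List.In y (nodes g) ->
        forall b lbl ch ch', x.2 = Node b lbl ch -> y.2 = Node b lbl ch' ->
        [seq e <- x.1 | e.1.1 == b] = [seq e <- y.1 | e.1.1 == b]).

Definition valid_strat (R : realType) (g : tree R) (b : bool) (s : strat R) : Prop :=
  forall lbl, (b, lbl) \in infosets g ->
    (forall a, (a < arity g b lbl)%N -> 0 <= s lbl a) /\
    \sum_(a < arity g b lbl) s lbl a = 1.

Fixpoint eu (R : realType) (s1 s2 : strat R) (t : tree R) : R :=
  match t with
  | Leaf u => u
  | Chance ps ch =>
      (fix go (l : seq (tree R)) (c : nat) :=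
         match l with
         | [::] => 0
         | t' :: l' => nth 0 ps c * eu s1 s2 t' + go l' c.+1
         end) ch 0%N
  | Node b lbl ch =>
      (fix go (l : seq (tree R)) (c : nat) :=
         match l with
         | [::] => 0
         | t' :: l' => (if b then s1 else s2) lbl c * eu s1 s2 t' + go l' c.+1
         end) ch 0%N
  end.

(* cfv_aux p lbl a s1 s2 t r = sum over histories h of information set     *)
(* (p, lbl) inside t of v_p(ha), where r is the product of the chance and  *)
(* opponent probabilities on the path from the root to t.                *)
(* v_p(ha) = pi_{-p}(h) * (expected u_p of the subtree at ha).           *)
Fixpoint cfv_aux (R : realType) (p : bool) (lbl a : nat) (s1 s2 : strat R)
    (t : tree R) (r : R) : R :=
  match t with
  | Leaf _ => 0
  | Chance ps ch =>
      (fix go (l : seq (tree R)) (c : nat) :=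
         match l with
         | [::] => 0
         | t' :: l' => cfv_aux p lbl a s1 s2 t' (r * nth 0 ps c) + go l' c.+1
         end) ch 0%N
  | Node b J ch =>
      (if (b == p) && (J == lbl)
       then r * ((if p then 1 else -1) * eu s1 s2 (nth (Leaf 0) ch a))
       else 0) +
      (fix go (l : seq (tree R)) (c : nat) :=
         match l with
         | [::] => 0
         | t' :: l' =>
             cfv_aux p lbl a s1 s2 t'
               (if b == p then r else r * (if b then s1 else s2) J c)
             + go l' c.+1
         end) ch 0%N
  end.

Definition cfv (R : realType) (g : tree R) (p : bool) (s1 s2 : strat R)
    (lbl a : nat) : R :=
  cfv_aux p lbl a s1 s2 g 1.

Definition rm (R : realType) (n : nat) (q : nat -> R) (a : nat) : R :=
  if (a < n)%N then
    if [exists a' : 'I_n, 0 < q a'] then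
      Num.max (q a) 0 / \sum_(a' < n) Num.max (q a') 0
    else n%:R^-1
  else 0.

Definition sigma_of (R : realType) (g : tree R) (p : bool)
    (Q : nat -> nat -> R) : strat R :=
  fun lbl a => rm (arity g p lbl) (Q lbl) a.

Definition cfr_update (R : realType) (g : tree R) (p : bool)
    (Q : nat -> nat -> R) (s1 s2 : strat R) : nat -> nat -> R :=
  fun lbl a =>
    let n := arity g p lbl in
    let sg := sigma_of g p Q lbl in
    let v := cfv g p s1 s2 lbl in
    Num.max (Q lbl a + v a - \sum_(b < n) sg b * v b) 0.

Fixpoint cfr_plus (R : realType) (g : tree R) (t : nat)
    : (nat -> nat -> R) * (nat -> nat -> R) :=
  match t with
  | 0%N => (fun _ _ => 0, fun _ _ => 0)
  | t'.+1 =>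
      let Q1 := (cfr_plus g t').1 in
      let Q2 := (cfr_plus g t').2 in
      let Q1' := cfr_update g true Q1 (sigma_of g true Q1) (sigma_of g false Q2) in
      let Q2' := cfr_update g false Q2 (sigma_of g true Q1') (sigma_of g false Q2) in
      (Q1', Q2')
  end.

Definition sigma1 (R : realType) (g : tree R) (t : nat) : strat R :=
  sigma_of g true (cfr_plus g t).1.
Definition sigma2 (R : realType) (g : tree R) (t : nat) : strat R :=
  sigma_of g false (cfr_plus g t).2.

(* Exploitability of the profile (sum_i w_i sigma1_i, sum_j w'_j sigma2_j), *)
(* the averages being mixtures given as lists of (weight, strategy):       *)
(* max_{s1} u_1(s1, avg2) + max_{s2} u_2(avg1, s2), the maxima taken      *)
(* (as suprema) over all behavioural strategies.                          *)
Definition expl_mix (R : realType) (g : tree R) (m1 m2 : seq (R * strat R)) : R :=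
  sup [set x : R | exists s, valid_strat g true s /\
                     x = \sum_(w <- m2) w.1 * eu s w.2 g]
  + sup [set x : R | exists s, valid_strat g false s /\
                     x = \sum_(w <- m1) w.1 * - eu w.2 s g].

Definition avg1 (R : realType) (g : tree R) (t : nat) : seq (R * strat R) :=
  [seq ((2 * i%:R) / (t%:R ^+ 2 + t%:R), sigma1 g i) | i <- iota 1 t].
Definition avg2 (R : realType) (g : tree R) (t : nat) : seq (R * strat R) :=
  [seq ((2 * i.+1%:R) / (t%:R ^+ 2 + t%:R), sigma2 g i) | i <- iota 0 t].

(* Main.v *)
Require Import Defs.
From HB Require Import structures.
From mathcomp Require Import all_boot all_order all_algebra.
From mathcomp Require Import boolp classical_sets reals.
From mathcomp Require Import ring lra.
From Stdlib Require List.
Import Order.TTheory GRing.Theory Num.Theory.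
Local Open Scope ring_scope.
Set Implicit Arguments.
Unset Strict Implicit.
Unset Printing Implicit Defensive.


Section Basics.
Variable R : realType.
Implicit Types (t : tree R) (ch : seq (tree R)).

Fixpoint tree_ind2 (P : tree R -> Prop)
  (HL : forall u, P (Leaf u))
  (HC : forall ps ch, (forall t, List.In t ch -> P t) -> P (Chance ps ch))
  (HN : forall b J ch, (forall t, List.In t ch -> P t) -> P (Node b J ch))
  (t : tree R) : P t :=
  match t with
  | Leaf u => HL u
  | Chance ps ch => HC ps ch
      ((fix F (l : seq (tree R)) : forall t, List.In t l -> P t :=
         match l with
         | [::] => fun t H => False_ind _ H
         | t' :: l' => fun t H =>
             match H with
             | or_introl e => eq_ind t' P (tree_ind2 HL HC HN t') t e
             | or_intror H' => F l' t H'
             end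
         end) ch)
  | Node b J ch => HN b J ch
      ((fix F (l : seq (tree R)) : forall t, List.In t l -> P t :=
         match l with
         | [::] => fun t H => False_ind _ H
         | t' :: l' => fun t H =>
             match H with
             | or_introl e => eq_ind t' P (tree_ind2 HL HC HN t') t e
             | or_intror H' => F l' t H'
             end
         end) ch)
  end.

Lemma In_nth ch i : (i < size ch)%N -> List.In (nth (Leaf 0) ch i) ch.
Proof.
elim: ch i => [|t' l IH] [|i] //= H; first by left.
by right; apply: IH.
Qed.

Definition gsum (F : nat -> tree R -> R) :=
  fix go (l : seq (tree R)) (c : nat) : R :=
    match l with [::] => 0 | t' :: l' => F c t' + go l' c.+1 end.

Lemma gsumE F l c : gsum F l c = \sum_(i < size l) F (c + i)%N (nth (Leaf 0) l i).
Proof.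
elim: l c => [|t' l IH] c /=; first by rewrite big_ord0.
rewrite big_ord_recl /= addn0 IH; congr (_ + _).
by apply: eq_bigr => i _; rewrite /bump /= addSnnS add1n.
Qed.

Lemma eu_Chance (s1 s2 : strat R) ps ch :
  eu s1 s2 (Chance ps ch) = \sum_(i < size ch) nth 0 ps i * eu s1 s2 (nth (Leaf 0) ch i).
Proof.
rewrite (_ : eu s1 s2 (Chance ps ch) = gsum (fun c t' => nth 0 ps c * eu s1 s2 t') ch 0) //.
by rewrite gsumE.
Qed.

Lemma eu_Node (s1 s2 : strat R) b J ch :
  eu s1 s2 (Node b J ch) = \sum_(i < size ch) (if b then s1 else s2) J i * eu s1 s2 (nth (Leaf 0) ch i).
Proof.
rewrite (_ : eu s1 s2 (Node b J ch) = gsum (fun c t' => (if b then s1 else s2) J c * eu s1 s2 t') ch 0) //.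
by rewrite gsumE.
Qed.

Lemma cfv_Leaf p lbl a (s1 s2 : strat R) u r : cfv_aux p lbl a s1 s2 (Leaf u) r = 0.
Proof. by []. Qed.

Lemma cfv_Chance p lbl a (s1 s2 : strat R) ps ch r :
  cfv_aux p lbl a s1 s2 (Chance ps ch) r =
  \sum_(i < size ch) cfv_aux p lbl a s1 s2 (nth (Leaf 0) ch i) (r * nth 0 ps i).
Proof.
rewrite (_ : cfv_aux p lbl a s1 s2 (Chance ps ch) r =
   gsum (fun c t' => cfv_aux p lbl a s1 s2 t' (r * nth 0 ps c)) ch 0) //.
by rewrite gsumE.
Qed.

Lemma cfv_Node p lbl a (s1 s2 : strat R) b J ch r :
  cfv_aux p lbl a s1 s2 (Node b J ch) r =
  (if (b == p) && (J == lbl)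
       then r * ((if p then 1 else -1) * eu s1 s2 (nth (Leaf 0) ch a))
       else 0) +
  \sum_(i < size ch) cfv_aux p lbl a s1 s2 (nth (Leaf 0) ch i)
        (if b == p then r else r * (if b then s1 else s2) J i).
Proof.
rewrite /=; congr (_ + _).
rewrite (_ : (fix go (l : seq (tree R)) (c : nat) := _) ch 0%N =
   gsum (fun c t' => cfv_aux p lbl a s1 s2 t'
               (if b == p then r else r * (if b then s1 else s2) J c)) ch 0) //.
by rewrite gsumE.
Qed.

Definition lift_nodes b J :=
  fix go (l : seq (tree R)) (c : nat) :=
    match l with
    | [::] => [::]
    | t' :: l' => [seq ((b, J, c) :: x.1, x.2) | x <- nodes t'] ++ go l' c.+1
    end.

Definition cat_nodes :=
  fix go (l : seq (tree R)) :=
    match l with [::] => [::] | t' :: l' => nodes t' ++ go l' end.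

Lemma nodes_Node b J ch : nodes (Node b J ch) = ([::], Node b J ch) :: lift_nodes b J ch 0.
Proof. by []. Qed.

Lemma nodes_Chance ps ch : nodes (Chance ps ch) = ([::], Chance ps ch) :: cat_nodes ch.
Proof. by []. Qed.

Lemma nodes_Leaf (u : R) : nodes (Leaf u) = [:: ([::], Leaf u)].
Proof. by []. Qed.

Lemma lift_nodesP b J ch c x :
  List.In x (lift_nodes b J ch c) <->
  exists i, (i < size ch)%N /\ exists y, List.In y (nodes (nth (Leaf 0) ch i)) /\
     x = ((b, J, (c + i)%N) :: y.1, y.2).
Proof.
elim: ch c => [|t' l IH] c /=.
  by split=> // -[i [Hi _]].
rewrite List.in_app_iff IH; split.
- case=> [/List.in_map_iff [y [<- Hy]]|[i [Hi [y [Hy ->]]]]].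
    by exists 0%N; split=> //; exists y; rewrite addn0.
  by exists i.+1; split=> //; exists y; rewrite addSnnS.
- case=> [[|i] [Hi [y [Hy ->]]]].
    by left; apply/List.in_map_iff; exists y; rewrite addn0.
  by right; exists i; split=> //; exists y; rewrite addSnnS.
Qed.

Lemma cat_nodesP ch x :
  List.In x (cat_nodes ch) <->
  exists i, (i < size ch)%N /\ List.In x (nodes (nth (Leaf 0) ch i)).
Proof.
elim: ch => [|t' l IH] /=.
  by split=> // -[i [Hi _]].
rewrite List.in_app_iff IH; split.
- by case=> [H|[i [Hi H]]]; [exists 0%N | exists i.+1].
- by case=> [[|i] [Hi H]]; [left | right; exists i].
Qed.

Lemma nodes_NodeP b J ch x :
  List.In x (nodes (Node b J ch)) <->
  x = ([::], Node b J ch) \/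
  exists i, (i < size ch)%N /\ exists y, List.In y (nodes (nth (Leaf 0) ch i)) /\
     x = ((b, J, i) :: y.1, y.2).
Proof.
rewrite nodes_Node /= lift_nodesP; split.
- by case=> [<-|H]; [left|right].
- by case=> [->|H]; [left|right].
Qed.

Lemma nodes_ChanceP ps ch x :
  List.In x (nodes (Chance ps ch)) <->
  x = ([::], Chance ps ch) \/
  exists i, (i < size ch)%N /\ List.In x (nodes (nth (Leaf 0) ch i)).
Proof.
rewrite nodes_Chance /= cat_nodesP; split.
- by case=> [<-|H]; [left|right].
- by case=> [->|H]; [left|right].
Qed.

Lemma nodes_self t : List.In ([::], t) (nodes t).
Proof. by case: t => *; left. Qed.

Lemma nodes_trans t x y : List.In x (nodes t) -> List.In y (nodes x.2) ->
  List.In (x.1 ++ y.1, y.2) (nodes t).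
Proof.
elim/tree_ind2: t x y => [u|ps ch IH|b J ch IH] x y.
- by rewrite nodes_Leaf => -[<-|//]; case: y.
- move=> /nodes_ChanceP [->|[i [Hi Hx]]]; first by case: y.
  move=> Hy; apply/nodes_ChanceP; right; exists i; split=> //.
  exact: (IH _ (In_nth Hi)).
- move=> /nodes_NodeP [->|[i [Hi [z [Hz ->]]]]]; first by case: y.
  move=> /= Hy; apply/nodes_NodeP; right; exists i; split=> //.
  exists (z.1 ++ y.1, y.2); split=> //.
  exact: (IH _ (In_nth Hi)).
Qed.

End Basics.


Lemma pmap_In (A : Type) (B : eqType) (f : A -> option B) l x d :
  List.In x l -> f x = Some d -> d \in pmap f l.
Proof.
elim: l => [|y l IH] //= [->|H] Hf; first by rewrite Hf /= mem_head.
by case: (f y) => [b|] //=; rewrite ?in_cons IH ?orbT.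
Qed.

Lemma In_pmap (A : Type) (B : eqType) (f : A -> option B) l d :
  d \in pmap f l -> exists x, List.In x l /\ f x = Some d.
Proof.
elim: l => [|y l IH] //=.
case E: (f y) => [b|] //=; last by move=> /IH [x [Hx Hf]]; exists x; split=> //; right.
rewrite in_cons => /orP [/eqP ->|/IH [x [Hx Hf]]]; first by exists y; split=> //; left.
by exists x; split=> //; right.
Qed.

Section Game.
Variable R : realType.
Variable g : tree R.

Lemma decs_node x b J ch : List.In x (nodes g) -> x.2 = Node b J ch ->
  (b, J, size ch) \in decs g.
Proof. by move=> Hx Hn; apply: (pmap_In Hx); rewrite Hn. Qed.

Lemma decs_In d : d \in decs g ->
  exists x, List.In x (nodes g) /\ exists ch, x.2 = Node d.1.1 d.1.2 ch /\ d.2 = size ch.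
Proof.
move=> /In_pmap [x [Hx Hf]]; exists x; split=> //.
move: Hf; case: x.2 => // b J ch [<-]; by exists ch.
Qed.

Lemma infosets_node x b J ch : List.In x (nodes g) -> x.2 = Node b J ch ->
  (b, J) \in infosets g.
Proof.
move=> Hx Hn; rewrite /infosets mem_undup.
by apply/mapP; exists (b, J, size ch) => //; apply: decs_node Hn.
Qed.

Lemma infosets_decs b J : (b, J) \in infosets g ->
  exists x, List.In x (nodes g) /\ exists ch, x.2 = Node b J ch.
Proof.
rewrite /infosets mem_undup => /mapP [d Hd E].
have [x [Hx [ch [Hn _]]]] := decs_In Hd.
by exists x; split=> //; exists ch; rewrite Hn -E.
Qed.

Lemma arity_size x b J ch : wf_game g -> List.In x (nodes g) -> x.2 = Node b J ch ->
  arity g b J = size ch.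
Proof.
move=> [_ [_ [Hsz _]]] Hx Hn.
have Hd := decs_node Hx Hn.
rewrite /arity.
set l := [seq y <- decs g | y.1 == (b, J)].
have : (b, J, size ch) \in l by rewrite mem_filter eqxx Hd.
case El : l => [|d l'] //= _.
have : d \in l by rewrite El mem_head.
rewrite mem_filter => /andP [/eqP Hd1 Hdd].
have [y [Hy [ch' [Hn' Hs]]]] := decs_In Hdd.
rewrite Hs; symmetry; apply: (Hsz _ _ Hx Hy b J ch ch' Hn).
by rewrite Hn' Hd1.
Qed.

Lemma arity_max b J : (arity g b J <= max_actions g)%N.
Proof.
rewrite /arity /max_actions.
case El : [seq y <- decs g | y.1 == (b, J)] => [|d l'] //=.
have : d \in [seq y <- decs g | y.1 == (b, J)] by rewrite El mem_head.
rewrite mem_filter => /andP [_ Hd].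
exact: (leq_bigmax_seq d).
Qed.

Lemma leaf_in x u : List.In x (nodes g) -> x.2 = Leaf u -> u \in leaf_utils g.
Proof. by move=> Hx Hn; apply: (pmap_In Hx); rewrite Hn. Qed.

Lemma le_bigmax0 (T : eqType) (s : seq T) (F : T -> R) y :
  y \in s -> F y <= \big[Num.max/0]_(z <- s) F z.
Proof.
elim: s => [|a s IH] //; rewrite in_cons big_cons => /orP [/eqP ->|H].
  by rewrite le_max lexx.
by rewrite le_max IH ?orbT.
Qed.

Lemma bigmax0_ge0 (T : eqType) (s : seq T) (F : T -> R) :
  0 <= \big[Num.max/0]_(z <- s) F z.
Proof.
elim: s => [|a s IH]; first by rewrite big_nil.
by rewrite big_cons le_max IH orbT.
Qed.

Lemma util_rangeP u u' : u \in leaf_utils g -> u' \in leaf_utils g ->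
  u - u' <= util_range g.
Proof.
move=> Hu Hu'; rewrite /util_range.
apply: le_trans (le_bigmax0 _ Hu).
exact: (le_bigmax0 (fun z => u - z) Hu').
Qed.

Lemma util_range_ge0 : 0 <= util_range g.
Proof. exact: bigmax0_ge0. Qed.

End Game.


Section Convex.
Variable R : realType.

Lemma convex_le n (w f : nat -> R) B :
  (forall i, (i < n)%N -> 0 <= w i) -> \sum_(i < n) w i = 1 ->
  (forall i, (i < n)%N -> f i <= B) -> \sum_(i < n) w i * f i <= B.
Proof.
move=> Hw Hs Hf.
have -> : B = \sum_(i < n) w i * B by rewrite -mulr_suml Hs mul1r.
by apply: ler_sum => i _; apply: ler_wpM2l; [apply: Hw | apply: Hf].
Qed.

Lemma convex_ge n (w f : nat -> R) B :
  (forall i, (i < n)%N -> 0 <= w i) -> \sum_(i < n) w i = 1 ->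
  (forall i, (i < n)%N -> B <= f i) -> B <= \sum_(i < n) w i * f i.
Proof.
move=> Hw Hs Hf.
have -> : B = \sum_(i < n) w i * B by rewrite -mulr_suml Hs mul1r.
by apply: ler_sum => i _; apply: ler_wpM2l; [apply: Hw | apply: Hf].
Qed.

Lemma rm_ge0 n (q : nat -> R) a : 0 <= rm n q a.
Proof.
rewrite /rm; case: ifP => // _; case: ifP => _; last by rewrite invr_ge0 ler0n.
apply: divr_ge0; first by rewrite le_max lexx orbT.
by apply: sumr_ge0 => i _; rewrite le_max lexx orbT.
Qed.

Lemma rm_sum n (q : nat -> R) : (0 < n)%N -> \sum_(a < n) rm n q a = 1.
Proof.
move=> Hn; rewrite /rm.
rewrite (eq_bigr (fun a : 'I_n => if [exists a' : 'I_n, 0 < q a'] then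
    Num.max (q a) 0 / \sum_(a' < n) Num.max (q a') 0 else n%:R^-1)); last first.
  by move=> a _; rewrite ltn_ord.
case E : [exists a' : 'I_n, 0 < q a'].
  move: E => /existsP [a0 Ha0].
  rewrite -mulr_suml divff //; apply/lt0r_neq0.
  rewrite (bigD1 a0) //=; apply: ltr_wpDr; last by rewrite lt_max Ha0.
  by apply: sumr_ge0 => i _; rewrite le_max lexx orbT.
rewrite sumr_const card_ord -[_ *+ _]mulr_natl divff //.
by rewrite pnatr_eq0 -lt0n.
Qed.

Lemma rm_le1 n (q : nat -> R) a : (0 < n)%N -> rm n q a <= 1.
Proof.
move=> Hn; case: (ltnP a n) => Ha; last by rewrite /rm ltnNge Ha.
rewrite -(rm_sum q Hn) (bigD1 (Ordinal Ha)) //= lerDl.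
by apply: sumr_ge0 => i _; apply: rm_ge0.
Qed.

Lemma rm_pos n (q : nat -> R) a : [exists a' : 'I_n, 0 < q a'] -> (a < n)%N ->
  0 <= q a -> rm n q a = q a / \sum_(a' < n) Num.max (q a') 0.
Proof.
move=> He Ha Hq; rewrite /rm Ha He; congr (_ / _).
by apply/max_idPl.
Qed.

Lemma rm_unif n (q : nat -> R) a : ~~ [exists a' : 'I_n, 0 < q a'] -> (a < n)%N ->
  rm n q a = n%:R^-1.
Proof. by move=> He Ha; rewrite /rm Ha (negbTE He). Qed.

End Convex.

Section Good.
Variable R : realType.
Variable g : tree R.

Definition good_node (s1 s2 : strat R) (t : tree R) : Prop :=
  match t with
  | Leaf u => u \in leaf_utils g
  | Chance ps ch => (forall i, (i < size ch)%N -> 0 <= nth 0 ps i) /\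
                    \sum_(i < size ch) nth 0 ps i = 1
  | Node b J ch => [/\ arity g b J = size ch, (0 < size ch)%N, (b, J) \in infosets g,
      forall i, (i < size ch)%N -> 0 <= (if b then s1 else s2) J i &
      \sum_(i < size ch) (if b then s1 else s2) J i = 1]
  end.

Definition AllG s1 s2 (t : tree R) := forall y, List.In y (nodes t) -> good_node s1 s2 y.2.

Lemma AllG_Node s1 s2 b J ch : AllG s1 s2 (Node b J ch) ->
  good_node s1 s2 (Node b J ch) /\ forall i, (i < size ch)%N -> AllG s1 s2 (nth (Leaf 0) ch i).
Proof.
move=> H; split; first by apply: (H ([::], Node b J ch)); left.
move=> i Hi y Hy; apply: (H ((b, J, i) :: y.1, y.2)).
by apply/nodes_NodeP; right; exists i; split=> //; exists y.
Qed.

Lemma AllG_Chance s1 s2 ps ch : AllG s1 s2 (Chance ps ch) ->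
  good_node s1 s2 (Chance ps ch) /\ forall i, (i < size ch)%N -> AllG s1 s2 (nth (Leaf 0) ch i).
Proof.
move=> H; split; first by apply: (H ([::], Chance ps ch)); left.
move=> i Hi y Hy; apply: H.
by apply/nodes_ChanceP; right; exists i.
Qed.

Lemma AllG_sub s1 s2 x : AllG s1 s2 g -> List.In x (nodes g) -> AllG s1 s2 x.2.
Proof. by move=> H Hx y Hy; apply: (H _ (nodes_trans Hx Hy)). Qed.

Lemma AllG_g s1 s2 : wf_game g -> valid_strat g true s1 -> valid_strat g false s2 ->
  AllG s1 s2 g.
Proof.
move=> Hwf Hv1 Hv2 x Hx.
have [Hch [Hnd _]] := Hwf.
case Ex : x.2 => [u|ps ch|b J ch] /=.
- exact: leaf_in Ex.
- have [Hs Hn Ha Hsum] := Hch x Hx ps ch Ex.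
  split.
    by move=> i Hi; move/all_nthP: Ha => /(_ 0 i); rewrite Hs; apply.
  by rewrite -Hsum (big_nth 0) big_mkord Hs.
- have Ha := arity_size Hwf Hx Ex.
  have Hi := infosets_node Hx Ex.
  split=> //; first exact: (Hnd x Hx b J ch Ex).
    by case: b Ex Ha Hi => _ Ha Hi i Hlt; [have [H _] := Hv1 J Hi | have [H _] := Hv2 J Hi];
       apply: H; rewrite Ha.
  by case: b Ex Ha Hi => _ Ha Hi; [have [_ H] := Hv1 J Hi | have [_ H] := Hv2 J Hi];
       rewrite -Ha.
Qed.

Lemma sigma_valid p Q : wf_game g -> valid_strat g p (sigma_of g p Q).
Proof.
move=> Hwf J HJ.
have [x [Hx [ch Hn]]] := infosets_decs HJ.
have Ha := arity_size Hwf Hx Hn.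
have [_ [Hnd _]] := Hwf.
have Hpos : (0 < arity g p J)%N by rewrite Ha; exact: (Hnd x Hx p J ch Hn).
split; first by move=> a _; apply: rm_ge0.
exact: rm_sum.
Qed.

Lemma eu_ub s1 s2 t B : AllG s1 s2 t -> (forall u, u \in leaf_utils g -> u <= B) ->
  eu s1 s2 t <= B.
Proof.
move=> + HB; elim/tree_ind2: t => [u|ps ch IH|b J ch IH].
- by move=> H; apply: HB; apply: (H ([::], Leaf u)); left.
- move=> /AllG_Chance [[H0 H1] Hc]; rewrite eu_Chance.
  apply: (convex_le (w := fun i => nth 0 ps i) (f := fun i => eu s1 s2 (nth (Leaf 0) ch i))) => //.
  by move=> i Hi; apply: IH; [apply: In_nth | apply: Hc].
- move=> /AllG_Node [[_ _ _ H0 H1] Hc]; rewrite eu_Node.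
  apply: (convex_le (w := fun i => (if b then s1 else s2) J i)
                    (f := fun i => eu s1 s2 (nth (Leaf 0) ch i))) => //.
  by move=> i Hi; apply: IH; [apply: In_nth | apply: Hc].
Qed.

Lemma eu_lb s1 s2 t B : AllG s1 s2 t -> (forall u, u \in leaf_utils g -> B <= u) ->
  B <= eu s1 s2 t.
Proof.
move=> + HB; elim/tree_ind2: t => [u|ps ch IH|b J ch IH].
- by move=> H; apply: HB; apply: (H ([::], Leaf u)); left.
- move=> /AllG_Chance [[H0 H1] Hc]; rewrite eu_Chance.
  apply: (convex_ge (w := fun i => nth 0 ps i) (f := fun i => eu s1 s2 (nth (Leaf 0) ch i))) => //.
  by move=> i Hi; apply: IH; [apply: In_nth | apply: Hc].
- move=> /AllG_Node [[_ _ _ H0 H1] Hc]; rewrite eu_Node.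
  apply: (convex_ge (w := fun i => (if b then s1 else s2) J i)
                    (f := fun i => eu s1 s2 (nth (Leaf 0) ch i))) => //.
  by move=> i Hi; apply: IH; [apply: In_nth | apply: Hc].
Qed.

Lemma eu_diff s1 s2 t t' : AllG s1 s2 t -> AllG s1 s2 t' ->
  eu s1 s2 t - eu s1 s2 t' <= util_range g.
Proof.
move=> Ht Ht'.
have H : eu s1 s2 t - util_range g <= eu s1 s2 t'.
  apply: eu_lb => // u' Hu'; rewrite lerBlDr.
  apply: eu_ub => // u Hu; rewrite -lerBlDl.
  exact: util_rangeP.
by rewrite lerBlDr -lerBlDl.
Qed.

End Good.


Section PD.
Variable R : realType.
Variable g : tree R.

Definition prof (p : bool) (sp so : strat R) : strat R * strat R :=
  if p then (sp, so) else (so, sp).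
Definition sgn (p : bool) : R := if p then 1 else -1.
Definition rho (p : bool) (s : strat R) (pre : seq (bool * nat * nat)) : R :=
  \prod_(e <- pre | e.1.1 == p) s e.1.2 e.2.

Lemma prof_pick p sp so b :
  (if b then (prof p sp so).1 else (prof p sp so).2) = if b == p then sp else so.
Proof. by case: p; case: b. Qed.

Lemma rho_rcons p s pre b J c :
  rho p s (rcons pre (b, J, c)) = rho p s pre * (if b == p then s J c else 1).
Proof.
rewrite /rho -cats1 big_cat big_cons big_nil /=.
by case: (b == p); rewrite ?mulr1.
Qed.

Lemma rho_filter p s pre : rho p s [seq e <- pre | e.1.1 == p] = rho p s pre.
Proof. by rewrite /rho big_filter_cond; apply: eq_bigl => e /=; rewrite andbb. Qed.

Lemma sum_seq_pick (L : seq nat) (F : nat -> R) J0 : uniq L -> J0 \in L ->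
  \sum_(J <- L) (if J0 == J then F J else 0) = F J0.
Proof.
move=> HU HJ; rewrite (big_rem J0) //= eqxx big1_seq ?addr0 // => J /andP [_ H].
case: eqP => // E; subst J.
by rewrite mem_rem_uniqF in H.
Qed.

Lemma PD p (s sg tau : strat R) t r pre (Lsl : seq nat) (LL : nat -> seq (bool * nat * nat)) :
  uniq Lsl ->
  (forall x, List.In x (nodes t) -> forall b J ch, x.2 = Node b J ch -> b = p ->
     [/\ J \in Lsl, [seq e <- pre ++ x.1 | e.1.1 == p] = LL J & arity g p J = size ch]) ->
  r * rho p s pre * (sgn p * (eu (prof p s tau).1 (prof p s tau).2 t
                              - eu (prof p sg tau).1 (prof p sg tau).2 t))
  = \sum_(J <- Lsl) rho p s (LL J) * \sum_(a < arity g p J)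
       (s J a - sg J a) * cfv_aux p J a (prof p sg tau).1 (prof p sg tau).2 t r.
Proof.
move=> HU; elim/tree_ind2: t r pre => [u|ps ch IH|b J0 ch IH] r pre H.
- rewrite /= subrr !mulr0 big1 // => J _.
  by rewrite big1 ?mulr0 // => a _; rewrite mulr0.
- under eq_bigr => J _ do under eq_bigr => a _ do rewrite cfv_Chance mulr_sumr.
  under eq_bigr => J _ do rewrite exchange_big mulr_sumr.
  rewrite exchange_big !eu_Chance -sumrB mulr_sumr mulr_sumr.
  apply: eq_bigr => i _.
  have Hi := ltn_ord i.
  rewrite -(IH _ (In_nth Hi) (r * nth 0 ps i) pre); first by ring.
  move=> x Hx; apply: H; apply/nodes_ChanceP; right; by exists i.
- have Hc : forall i, (i < size ch)%N -> forall x, List.In x (nodes (nth (Leaf 0) ch i)) ->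
     forall b' J ch', x.2 = Node b' J ch' -> b' = p ->
     [/\ J \in Lsl, [seq e <- rcons pre (b, J0, i) ++ x.1 | e.1.1 == p] = LL J
       & arity g p J = size ch'].
    move=> i Hi x Hx b' J ch' Hn Hb; rewrite cat_rcons.
    apply: (H ((b, J0, i) :: x.1, x.2)) Hn Hb.
    by apply/nodes_NodeP; right; exists i; split=> //; exists x.
  under eq_bigr => J _ do under eq_bigr => a _ do rewrite cfv_Node mulrDr mulr_sumr.
  under eq_bigr => J _ do rewrite big_split mulrDr.
  rewrite big_split.
  under [X in _ = _ + X]eq_bigr => J _ do rewrite exchange_big mulr_sumr.
  rewrite [X in _ = _ + X]exchange_big.
  rewrite !eu_Node !prof_pick.
  case: (eqVneq b p) => Hb.
  + subst b.
    have [HJ0 HL0 Har] := H ([::], Node p J0 ch) (or_introl erefl) p J0 ch erefl erefl.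
    rewrite cats0 in HL0.
    rewrite (eq_bigr (fun J => if J0 == J then rho p s (LL J) *
        \sum_(a < arity g p J) (s J a - sg J a) *
          (r * (sgn p * eu (prof p sg tau).1 (prof p sg tau).2 (nth (Leaf 0) ch a))) else 0));
      last first.
      move=> J _; rewrite /=; case: eqP => _; last first.
        by rewrite big1 ?mulr0 // => a _; rewrite mulr0.
      by rewrite /sgn.
    rewrite sum_seq_pick // -HL0 rho_filter Har.
    rewrite mulr_sumr -big_split -sumrB !mulr_sumr /=.
    apply: eq_bigr => i _.
    have Hi := ltn_ord i.
    rewrite -(IH _ (In_nth Hi) r (rcons pre (p, J0, nat_of_ord i)) (Hc i Hi)) rho_rcons eqxx /sgn.
    by ring.
  + rewrite [X in _ = X + _]big1; last first.
      by move=> J _; rewrite big1 ?mulr0 // => a _; rewrite /= mulr0.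
    rewrite add0r -sumrB !mulr_sumr.
    apply: eq_bigr => i _.
    have Hi := ltn_ord i.
    rewrite -(IH _ (In_nth Hi) _ (rcons pre (b, J0, nat_of_ord i)) (Hc i Hi)) rho_rcons (negbTE Hb) /sgn.
    by ring.
Qed.

End PD.
Arguments sgn {R}.


Section Top.
Variable R : realType.
Variable g : tree R.
Implicit Types (t : tree R).

Definition Ls (p : bool) : seq nat := [seq x.2 | x <- infosets g & x.1 == p].
Definition isnode (p : bool) (J : nat) (t : tree R) : bool :=
  match t with Node b J' _ => (b == p) && (J' == J) | _ => false end.
Definition LJ (p : bool) (J : nat) : seq (bool * nat * nat) :=
  [seq e <- head [::] [seq x.1 | x <- nodes g & isnode p J x.2] | e.1.1 == p].

Lemma isnodeP p J t : isnode p J t -> exists ch, t = Node p J ch.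
Proof. by case: t => // b J' ch /andP [/eqP -> /eqP ->]; exists ch. Qed.

Lemma head_filter_In (A B : Type) (P : pred A) (f : A -> B) d l x :
  List.In x l -> P x -> exists y, List.In y l /\ P y /\ head d [seq f z | z <- l & P z] = f y.
Proof.
elim: l => [|z l IH] //= [->|H] Hx; first by rewrite Hx /=; exists x; split=> //; left.
case E: (P z) => /=; first by exists z; split=> //; left.
by have [y [Hy [Py E']]] := IH H Hx; exists y; split=> //; right.
Qed.

Lemma LJ_eq p J x : wf_game g -> List.In x (nodes g) -> isnode p J x.2 ->
  [seq e <- x.1 | e.1.1 == p] = LJ p J.
Proof.
move=> [_ [_ [_ Hpr]]] Hx Hn; rewrite /LJ.
have [y [Hy [Py ->]]] := @head_filter_In _ _ (fun z => isnode p J z.2) (fun z => z.1) [::] _ _ Hx Hn.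
have [ch Ex] := isnodeP Hn; have [ch' Ey] := isnodeP Py.
exact: (Hpr _ _ Hx Hy p J ch ch' Ex Ey).
Qed.

Lemma Ls_uniq p : uniq (Ls p).
Proof.
rewrite /Ls map_inj_in_uniq ?filter_uniq ?undup_uniq //.
move=> [b1 J1] [b2 J2]; rewrite !mem_filter /= => /andP [/eqP -> _] /andP [/eqP -> _].
by move=> ->.
Qed.

Lemma Ls_mem p J : (p, J) \in infosets g -> J \in Ls p.
Proof. by move=> H; apply/mapP; exists (p, J) => //; rewrite mem_filter eqxx. Qed.

Lemma Ls_infosets p J : J \in Ls p -> (p, J) \in infosets g.
Proof. by move=> /mapP [[b J'] + ->]; rewrite mem_filter /= => /andP [/eqP -> ->]. Qed.

Lemma Ls_size : (size (Ls true) + size (Ls false))%N = size (infosets g).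
Proof.
rewrite /Ls !size_map !size_filter -(count_predC (fun x : bool * nat => x.1 == true)).
congr (_ + _)%N; apply: eq_count => -[b J] /=; by case: b.
Qed.

Lemma PD_top p (s sg tau : strat R) : wf_game g ->
  sgn p * (eu (prof p s tau).1 (prof p s tau).2 g - eu (prof p sg tau).1 (prof p sg tau).2 g)
  = \sum_(J <- Ls p) rho p s (LJ p J) * \sum_(a < arity g p J)
       (s J a - sg J a) * cfv g p (prof p sg tau).1 (prof p sg tau).2 J a.
Proof.
move=> Hwf.
have E : rho p s [::] = 1 by rewrite /rho big_nil.
rewrite /cfv -(@PD R g p s sg tau g 1 [::] (Ls p) (LJ p)).
- by rewrite E !mul1r.
- exact: Ls_uniq.
move=> x Hx b J ch En Eb; subst b; split.
- by apply: Ls_mem; apply: infosets_node Hx En.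
- by apply: LJ_eq => //; rewrite En /= !eqxx.
- exact: arity_size Hwf Hx En.
Qed.

Lemma rho_cons p (s : strat R) e l : rho p s (e :: l) = (if e.1.1 == p then s e.1.2 e.2 else 1) * rho p s l.
Proof. by rewrite /rho big_cons; case: ifP; rewrite ?mul1r. Qed.

Lemma rho_path p (s : strat R) t : (forall y, List.In y (nodes t) -> forall J ch, y.2 = Node p J ch ->
     forall c, (c < size ch)%N -> 0 <= s J c <= 1) ->
  forall x, List.In x (nodes t) -> 0 <= rho p s x.1 <= 1.
Proof.
elim/tree_ind2: t => [u|ps ch IH|b J ch IH] H x.
- by rewrite nodes_Leaf => -[<-|//]; rewrite /rho big_nil ler01 lexx.
- move=> /nodes_ChanceP [->|[i [Hi Hx]]]; first by rewrite /rho big_nil ler01 lexx.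
  apply: (IH _ (In_nth Hi)) => // y Hy; apply: H.
  by apply/nodes_ChanceP; right; exists i.
- move=> /nodes_NodeP [->|[i [Hi [y [Hy ->]]]]]; first by rewrite /rho big_nil ler01 lexx.
  rewrite rho_cons /=.
  have /andP [H0 H1] : 0 <= rho p s y.1 <= 1.
    apply: (IH _ (In_nth Hi)) => // z Hz; apply: (H ((b, J, i) :: z.1, z.2)).
    by apply/nodes_NodeP; right; exists i; split=> //; exists z.
  case: eqP => Eb; last by rewrite mul1r H0 H1.
  subst b; have /andP [H2 H3] := H ([::], Node p J ch) (or_introl erefl) J ch erefl i Hi.
  by rewrite mulr_ge0 //= mulr_ile1.
Qed.

Lemma rho_LJ p (s : strat R) J : wf_game g -> valid_strat g p s -> 0 <= rho p s (LJ p J) <= 1.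
Proof.
move=> Hwf Hv; rewrite /LJ rho_filter.
case E: [seq x.1 | x <- nodes g & isnode p J x.2] => [|l0 l] /=.
  by rewrite /rho big_nil ler01 lexx.
have : l0 \in [seq x.1 | x <- nodes g & isnode p J x.2] by rewrite E mem_head.
have [x [Hx [Px Hh]]] : exists x, List.In x (nodes g) /\ isnode p J x.2 /\ x.1 = l0.
  move: E; elim: (nodes g) => [|z zs IHz] //=.
  case Pz: (isnode p J z.2) => /=; first by move=> [<- _]; exists z; split=> //; left.
  by move=> /IHz [x [Hx Px]]; exists x; split=> //; right.
move=> _; rewrite -Hh.
apply: (rho_path (t := g)) => // y Hy J' ch Ey c Hc.
have Ha := arity_size Hwf Hy Ey.
have Hi := infosets_node Hy Ey.
have [H0 H1] := Hv J' Hi.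
rewrite -Ha in Hc; rewrite H0 //=.
rewrite -H1 (bigD1 (Ordinal Hc)) //= lerDl.
by apply: sumr_ge0 => i _; apply: H0.
Qed.

Lemma cfv_zero p J a (s1 s2 : strat R) t r :
  (forall x, List.In x (nodes t) -> ~~ isnode p J x.2) -> cfv_aux p J a s1 s2 t r = 0.
Proof.
elim/tree_ind2: t r => [u|ps ch IH|b J0 ch IH] r H //.
- rewrite cfv_Chance big1 // => i _; apply: (IH _ (In_nth (ltn_ord i))) => x Hx.
  by apply: H; apply/nodes_ChanceP; right; exists i.
- rewrite cfv_Node.
  have := H ([::], Node b J0 ch) (or_introl erefl); rewrite /= => /negbTE ->.
  rewrite add0r big1 // => i _; apply: (IH _ (In_nth (ltn_ord i))) => x Hx.
  apply: (H ((b, J0, nat_of_ord i) :: x.1, x.2)).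
  by apply/nodes_NodeP; right; exists i; split=> //; exists x.
Qed.

Lemma sum_pick_le n (c0 : nat) (X : R) : 0 <= X ->
  \sum_(i < n) (if (i : nat) == c0 then X else 0) <= X.
Proof.
move=> HX; case: (ltnP c0 n) => Hc.
  rewrite (bigD1 (Ordinal Hc)) //= eqxx big1 ?addr0 // => i Hi.
  case: eqP => // E; exfalso; move: Hi; apply/negP; rewrite negbK.
  by apply/eqP; apply: val_inj.
rewrite big1 // => i _; case: eqP => // E.
by have := ltn_ord i; rewrite E ltnNge Hc.
Qed.

Lemma cfv_diff p J a a' (s1 s2 : strat R) t r pre L :
  AllG g s1 s2 t -> 0 <= r ->
  (forall x, List.In x (nodes t) -> isnode p J x.2 ->
     [seq e <- pre ++ x.1 | e.1.1 == p] = L) ->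
  (a < arity g p J)%N -> (a' < arity g p J)%N ->
  `|cfv_aux p J a s1 s2 t r - cfv_aux p J a' s1 s2 t r| <= util_range g * r.
Proof.
move=> + + + Ha Ha'.
elim/tree_ind2: t r pre => [u|ps ch IH|b J0 ch IH] r pre HG Hr H.
- by rewrite /= subrr normr0 mulr_ge0 // util_range_ge0.
- have [[H0 H1] Hc] := AllG_Chance HG.
  rewrite !cfv_Chance -sumrB.
  apply: le_trans (ler_norm_sum _ _ _) _.
  rewrite -[X in _ <= _ * X]mulr1 -H1 !mulr_sumr.
  apply: ler_sum => i _.
  have Hi := ltn_ord i.
  apply: (IH _ (In_nth Hi) _ pre (Hc _ Hi)).
    by apply: mulr_ge0 => //; apply: H0.
  by move=> x Hx; apply: H; apply/nodes_ChanceP; right; exists i.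
- have [[Har Hpos HI Hs0 Hs1] Hc] := AllG_Node HG.
  rewrite !cfv_Node.
  have Hch : forall i, (i < size ch)%N -> forall x, List.In x (nodes (nth (Leaf 0) ch i)) ->
      isnode p J x.2 -> [seq e <- rcons pre (b, J0, i) ++ x.1 | e.1.1 == p] = L.
    move=> i Hi x Hx Hn; rewrite cat_rcons.
    apply: (H ((b, J0, i) :: x.1, x.2)) => //.
    by apply/nodes_NodeP; right; exists i; split=> //; exists x.
  case Hn : ((b == p) && (J0 == J)).
  +
    move/andP: Hn => [/eqP Eb /eqP EJ]; subst b J0.
    have HL : [seq e <- pre | e.1.1 == p] = L.
      by rewrite -(H ([::], Node p J ch) (or_introl erefl)) ?cats0 //= !eqxx.
    have Hz : forall i, (i < size ch)%N -> forall a0 r0,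
        cfv_aux p J a0 s1 s2 (nth (Leaf 0) ch i) r0 = 0.
      move=> i Hi a0 r0; apply: cfv_zero => x Hx; apply/negP => Hn.
      have := Hch i Hi x Hx Hn.
      rewrite filter_cat -cats1 filter_cat /= eqxx -HL -catA => /(congr1 size).
      by rewrite size_cat /= -{2}[size _]addn0 => /eqP; rewrite eqn_add2l.
    rewrite !big1 ?addr0; try by move=> i _; rewrite Hz.
    rewrite -mulrBr -mulrBr normrM ger0_norm // mulrC.
    apply: ler_wpM2r => //.
    rewrite normrM.
    have -> : `|(if p then 1 else -1 : R)| = 1 by case: ifP => _; rewrite ?normrN normr1.
    rewrite mul1r ler_norml; rewrite Har in Ha Ha'.
    rewrite lerNl opprB !eu_diff //; try by apply: Hc.
  + rewrite !add0r -sumrB.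
    apply: le_trans (ler_norm_sum _ _ _) _.
    case: (eqVneq b p) Hn => Eb Hn.
    * subst b; rewrite /= in Hn.
      set c0 := (nth (p, 0%N, 0%N) L (size [seq e <- pre | e.1.1 == p])).2.
      apply: le_trans _ (sum_pick_le (size ch) c0 (mulr_ge0 (util_range_ge0 g) Hr)).
      apply: ler_sum => i _; have Hi := ltn_ord i. 
      case: eqP => Ei.
        exact: (IH _ (In_nth Hi) r (rcons pre (p, J0, nat_of_ord i)) (Hc _ Hi) Hr (Hch i Hi)).
      rewrite !cfv_zero ?subrr ?normr0 // => x Hx; apply/negP => Hnx;
        have := Hch i Hi x Hx Hnx;
        rewrite filter_cat -cats1 filter_cat /= eqxx -catA => EL; apply: Ei;
        by rewrite /c0 -EL nth_cat ltnn subnn.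
    * rewrite -[X in _ <= _ * X]mulr1 -Hs1 !mulr_sumr.
      apply: ler_sum => i _; have Hi := ltn_ord i.

      apply: (IH _ (In_nth Hi) _ (rcons pre (b, J0, nat_of_ord i)) (Hc _ Hi) _ (Hch i Hi)).
      exact: mulr_ge0 (Hs0 _ Hi).
Qed.

End Top.


Section RMplus.
Variable R : realType.
Variable n : nat.
Hypothesis hn : (0 < n)%N.
Variable l : R.
Variables (q v : nat -> nat -> R).
Definition rr i a := v i a - \sum_(b < n) rm n (q i) b * v i b.
Hypothesis Hq0 : forall a, q 0 a = 0.
Hypothesis Hq : forall i a, q i.+1 a = Num.max (q i a + v i a - \sum_(b < n) rm n (q i) b * v i b) 0.
Hypothesis Hr : forall i a, (a < n)%N -> `|rr i a| <= l.

Lemma q_ge0 i a : 0 <= q i a.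
Proof. by case: i => [|i]; rewrite ?Hq0 // Hq le_max lexx orbT. Qed.

Lemma qS_ge i a : q i a + rr i a <= q i.+1 a.
Proof. by rewrite Hq /rr addrA le_max lexx. Qed.

Lemma sum_sr i : \sum_(a < n) rm n (q i) a * rr i a = 0.
Proof.
rewrite /rr; under eq_bigr => a _ do rewrite mulrBr.
by rewrite sumrB -mulr_suml rm_sum // mul1r subrr.
Qed.

Lemma sumS_pos i : [exists a' : 'I_n, 0 < q i a'] -> 0 < \sum_(a' < n) Num.max (q i a') 0.
Proof.
move=> /existsP [a0 Ha0].
rewrite (bigD1 a0) //=; apply: ltr_wpDr; last by rewrite lt_max Ha0.
by apply: sumr_ge0 => j _; rewrite le_max lexx orbT.
Qed.

Lemma sum_qr i : \sum_(a < n) q i a * rr i a = 0.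
Proof.
case E : [exists a' : 'I_n, 0 < q i a'].
  have HS := sumS_pos E.
  set S := \sum_(a' < n) Num.max (q i a') 0 in HS.
  transitivity (S * \sum_(a < n) rm n (q i) a * rr i a); last by rewrite sum_sr mulr0.
  rewrite mulr_sumr; apply: eq_bigr => a _.
  rewrite rm_pos ?ltn_ord ?q_ge0 // -/S.
  by field; rewrite gt_eqF.
rewrite big1 // => a _.
have : ~~ (0 < q i a) by move/negbT: E; rewrite negb_exists => /forallP.
rewrite -leNgt => Ha.
have -> : q i a = 0 by apply/le_anti; rewrite Ha q_ge0.
by rewrite mul0r.
Qed.

Lemma max0_sqr (x : R) : Num.max x 0 ^+ 2 <= x ^+ 2.
Proof.
case: (lerP x 0) => H.
  by rewrite expr0n /= sqr_ge0.
by [].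
Qed.

Lemma q_sq i : \sum_(a < n) q i a ^+ 2 <= i%:R * n%:R * l ^+ 2.
Proof.
elim: i => [|i IH].
  by rewrite big1 ?mul0r // => a _; rewrite Hq0 expr0n.
apply: (@le_trans _ _ (\sum_(a < n) (q i a + rr i a) ^+ 2)).
  apply: ler_sum => a _; rewrite Hq /rr addrA; exact: max0_sqr.
  have Hrr : \sum_(a < n) rr i a ^+ 2 <= n%:R * l ^+ 2.
    have -> : n%:R * l ^+ 2 = \sum_(a < n) l ^+ 2 by rewrite sumr_const card_ord mulr_natl.
    apply: ler_sum => a _; have := Hr i (ltn_ord a); rewrite ler_norml => /andP [H1 H2].
    rewrite !expr2; nra.
  have -> : \sum_(a < n) (q i a + rr i a) ^+ 2 =
            \sum_(a < n) q i a ^+ 2 + 2 * \sum_(a < n) q i a * rr i a + \sum_(a < n) rr i a ^+ 2.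
    rewrite mulr_sumr -!big_split /=; apply: eq_bigr => a _; ring.
  rewrite sum_qr mulr0 addr0 -natr1 mulrDl mulrDl mul1r.
  exact: lerD.
Qed.

Lemma weighted T a : \sum_(i < T) i.+1%:R * rr i a <= T%:R * q T a.
Proof.
elim: T => [|T IH]; first by rewrite big_ord0 mul0r.
rewrite big_ord_recr /=.
have H1 := qS_ge T a; have H2 := q_ge0 T a.
apply: le_trans (lerD IH (lexx _)) _.
rewrite -natr1.
have HT : 0 <= T%:R :> R by rewrite ler0n.
nra.
Qed.

Lemma q_bound T a : (a < n)%N -> 0 <= l -> q T a <= l * Num.sqrt (n%:R * T%:R).
Proof.
move=> Ha Hl.
have H : q T a ^+ 2 <= (l * Num.sqrt (n%:R * T%:R)) ^+ 2.
  rewrite exprMn sqr_sqrtr ?mulr_ge0 ?ler0n //.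
  apply: le_trans (_ : \sum_(b < n) q T b ^+ 2 <= _).
    rewrite (bigD1 (Ordinal Ha)) //= lerDl.
    by apply: sumr_ge0 => b _; apply: sqr_ge0.
  apply: le_trans (q_sq T) _.
  by rewrite [_ * l ^+ 2]mulrC [T%:R * _]mulrC.
rewrite -ler_sqrt ?sqr_ge0 // !sqrtr_sqr in H.
by rewrite -[q T a]ger0_norm ?q_ge0 //; apply: le_trans H _; rewrite ger0_norm // mulr_ge0 ?sqrtr_ge0.
Qed.

Lemma improve i : 0 <= \sum_(a < n) rm n (q i.+1) a * rr i a.
Proof.
case E : [exists a' : 'I_n, 0 < q i.+1 a'].
  have HS := sumS_pos E.
  set S := \sum_(a' < n) Num.max (q i.+1 a') 0 in HS.
  have -> : \sum_(a < n) rm n (q i.+1) a * rr i a = S^-1 * \sum_(a < n) q i.+1 a * rr i a.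
    rewrite mulr_sumr; apply: eq_bigr => a _.
    by rewrite rm_pos ?ltn_ord ?q_ge0 // -/S; field; rewrite gt_eqF.
  apply: mulr_ge0; first by rewrite invr_ge0 ltW.
  apply: (@le_trans _ _ (\sum_(a < n) q i a * rr i a)); first by rewrite sum_qr.
  apply: ler_sum => a _.
  have H1 := qS_ge i a; have H2 := q_ge0 i a.
  rewrite Hq -/(rr i a) (_ : q i a + v i a - _ = q i a + rr i a); last by rewrite /rr addrA.
  case: (lerP (q i a + rr i a) 0) => H3.
    nra.
  nra.
(* no positive entry: q (i+1) = 0, hence q i = 0 *)
have Hz : forall a, (a < n)%N -> q i.+1 a = 0.
  move=> a Ha; apply/le_anti; rewrite q_ge0 andbT.
  have : ~~ (0 < q i.+1 (Ordinal Ha)) by move/negbT: E; rewrite negb_exists => /forallP.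
  by rewrite -leNgt.
have Hqr : forall a, (a < n)%N -> q i a * rr i a <= - q i a ^+ 2.
  move=> a Ha; have H1 := qS_ge i a; have H2 := q_ge0 i a.
  rewrite Hz // in H1; rewrite expr2; nra.
have Hsq : \sum_(a < n) q i a ^+ 2 <= 0.
  apply: (@le_trans _ _ (\sum_(a < n) - (q i a * rr i a))).
    by apply: ler_sum => a _; rewrite lerNr; exact: Hqr (ltn_ord a).
  by rewrite sumrN sum_qr oppr0.
have Hzi : forall a, (a < n)%N -> q i a = 0.
  move=> a Ha; apply/eqP; rewrite -sqrf_eq0; apply/eqP/le_anti.
  rewrite sqr_ge0 andbT; apply: le_trans Hsq.
  rewrite (bigD1 (Ordinal Ha)) //= lerDl.
  by apply: sumr_ge0 => b _; apply: sqr_ge0.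
apply: (@le_trans _ _ (\sum_(a < n) rm n (q i) a * rr i a)); first by rewrite sum_sr.
apply: ler_sum => a _; rewrite le_eqVlt; apply/orP; left; apply/eqP; congr (_ * _).
have E' : [exists a' : 'I_n, 0 < q i a'] = false.
  apply/negbTE; rewrite negb_exists; apply/forallP => b.
  by rewrite Hzi ?ltxx.
by rewrite /rm ltn_ord E E'.
Qed.

End RMplus.


Section Regret.
Variable R : realType.
Variable g : tree R.

Lemma prof_valid p (s tau : strat R) : valid_strat g p s -> valid_strat g (~~ p) tau ->
  valid_strat g true (prof p s tau).1 /\ valid_strat g false (prof p s tau).2.
Proof. by case: p. Qed.

Lemma arity_pos p J : wf_game g -> J \in Ls g p -> (0 < arity g p J)%N.
Proof.
move=> Hwf /Ls_infosets /infosets_decs [x [Hx [ch Hn]]].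
rewrite (arity_size Hwf Hx Hn).
by have [_ [Hnd _]] := Hwf; apply: (Hnd x Hx p J ch Hn).
Qed.

Lemma rho_mul_le (rh X B : R) : 0 <= rh <= 1 -> X <= B -> 0 <= B -> rh * X <= B.
Proof. move=> /andP [H0 H1] HX HB; nra. Qed.

Lemma sum_const_seq (L : seq nat) (B : R) : \sum_(J <- L) B = (size L)%:R * B.
Proof.
elim: L => [|J L IH]; first by rewrite big_nil mul0r.
by rewrite big_cons IH /= -[(size L).+1]add1n natrD mulrDl mul1r.
Qed.

Lemma diff_rr n (s sg v : nat -> R) : \sum_(a < n) s a = 1 ->
  \sum_(a < n) (s a - sg a) * v a = \sum_(a < n) s a * (v a - \sum_(b < n) sg b * v b).
Proof.
move=> Hs.
under eq_bigr => a _ do rewrite mulrBl.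
under [RHS]eq_bigr => a _ do rewrite mulrBr.
by rewrite !sumrB -mulr_suml Hs mul1r.
Qed.

Lemma rr_bound p J (s1 s2 : strat R) (qJ : nat -> R) a :
  wf_game g -> valid_strat g true s1 -> valid_strat g false s2 -> J \in Ls g p ->
  (a < arity g p J)%N ->
  `|cfv g p s1 s2 J a - \sum_(b < arity g p J) rm (arity g p J) qJ b * cfv g p s1 s2 J b|
    <= util_range g.
Proof.
move=> Hwf H1 H2 HJ Ha.
have Hn := arity_pos Hwf HJ.
set n := arity g p J in Ha Hn *.
have -> : cfv g p s1 s2 J a = \sum_(b < n) rm n qJ b * cfv g p s1 s2 J a.
  by rewrite -mulr_suml rm_sum // mul1r.
rewrite -sumrB.
apply: le_trans (ler_norm_sum _ _ _) _.
under eq_bigr => b _ do rewrite -mulrBr normrM (ger0_norm (rm_ge0 _ _ _)).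
apply: (convex_le (w := fun b => rm n qJ b) (f := fun b => `|cfv g p s1 s2 J a - cfv g p s1 s2 J b|)) => //; first by move=> *; apply: rm_ge0.
  exact: rm_sum.
move=> b Hb.
rewrite -[util_range g]mulr1.
have HA : AllG g s1 s2 g by apply: AllG_g.
have HL : forall x, List.In x (nodes g) -> isnode p J x.2 ->
    [seq e <- [::] ++ x.1 | e.1.1 == p] = LJ g p J.
  by move=> x Hx Hn'; apply: LJ_eq.
exact: (@cfv_diff R g p J a b s1 s2 g 1 [::] (LJ g p J) HA ler01 HL Ha Hb).
Qed.

Lemma regret_player p (Q : nat -> nat -> nat -> R) (tau : nat -> strat R) (s : strat R) T :
  wf_game g ->
  (forall J a, Q 0%N J a = 0) ->
  (forall i, Q i.+1 = cfr_update g p (Q i)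
       (prof p (sigma_of g p (Q i)) (tau i)).1 (prof p (sigma_of g p (Q i)) (tau i)).2) ->
  (forall i, valid_strat g (~~ p) (tau i)) ->
  valid_strat g p s ->
  \sum_(i < T) i.+1%:R * (sgn p *
     (eu (prof p s (tau i)).1 (prof p s (tau i)).2 g
      - eu (prof p (sigma_of g p (Q i)) (tau i)).1 (prof p (sigma_of g p (Q i)) (tau i)).2 g))
  <= (size (Ls g p))%:R * (T%:R * (util_range g * Num.sqrt ((max_actions g)%:R * T%:R))).
Proof.
move=> Hwf HQ0 HQ Htau Hs.
set B := T%:R * (util_range g * Num.sqrt ((max_actions g)%:R * T%:R)).
have Hl := util_range_ge0 g.
have HB : 0 <= B by rewrite mulr_ge0 ?ler0n // mulr_ge0 ?sqrtr_ge0.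
under eq_bigr => i _ do rewrite (PD_top _ _ _ _ Hwf) mulr_sumr.
rewrite exchange_big /= -sum_const_seq big_seq [X in _ <= X]big_seq.
apply: ler_sum => J HJ.
have Hn := arity_pos Hwf HJ.
set n := arity g p J in Hn *.
set qq := fun i a => Q i J a.
set vv := fun i a => cfv g p (prof p (sigma_of g p (Q i)) (tau i)).1
                             (prof p (sigma_of g p (Q i)) (tau i)).2 J a.
have Hq0 : forall a, qq 0%N a = 0 by move=> a; exact: HQ0.
have Hq : forall i a, qq i.+1 a =
    Num.max (qq i a + vv i a - \sum_(b < n) rm n (qq i) b * vv i b) 0.
  by move=> i a; rewrite /qq HQ.
have Hv1 : forall i, valid_strat g true (prof p (sigma_of g p (Q i)) (tau i)).1.
  by move=> i; have [] := prof_valid (sigma_valid (Q i) Hwf) (Htau i).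
have Hv2 : forall i, valid_strat g false (prof p (sigma_of g p (Q i)) (tau i)).2.
  by move=> i; have [] := prof_valid (sigma_valid (Q i) Hwf) (Htau i).
have Hr : forall i a, (a < n)%N -> `|rr n qq vv i a| <= util_range g.
  by move=> i a Ha; apply: rr_bound.
have HsJ := Hs J (Ls_infosets HJ).
have HX : forall i, \sum_(a < n) (s J a - sigma_of g p (Q i) J a) * vv i a
                  = \sum_(a < n) s J a * rr n qq vv i a.
  by move=> i; rewrite diff_rr //; case: HsJ.
under eq_bigr => i _ do rewrite [X in _ * (_ * X)]HX mulrCA.
rewrite -mulr_sumr.
apply: rho_mul_le => //; first exact: rho_LJ.
under eq_bigr => i _ do rewrite mulr_sumr.
rewrite exchange_big /=.
under eq_bigr => a _ do (under eq_bigr => i _ do rewrite mulrCA).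
under eq_bigr => a _ do rewrite -mulr_sumr.
have [Hs0 Hs1] := HsJ.
apply: (convex_le (w := fun a => s J a)
          (f := fun a => \sum_(i < T) i.+1%:R * rr n qq vv i a)) => // a Ha.
apply: le_trans (weighted Hq0 Hq T a) _.
rewrite /B; apply: ler_wpM2l; first by rewrite ler0n.
apply: le_trans (q_bound Hn Hq0 Hq Hr T Ha Hl) _.
apply: ler_wpM2l => //.
rewrite ler_sqrt ?mulr_ge0 ?ler0n //.
by apply: ler_wpM2r; rewrite ?ler0n // ler_nat arity_max.
Qed.

End Regret.


Section Final.
Variable R : realType.
Variable g : tree R.

Lemma improve_step p (Q : nat -> nat -> nat -> R) (tau : nat -> strat R) i :
  wf_game g ->
  (forall J a, Q 0%N J a = 0) ->
  (forall i, Q i.+1 = cfr_update g p (Q i)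
       (prof p (sigma_of g p (Q i)) (tau i)).1 (prof p (sigma_of g p (Q i)) (tau i)).2) ->
  0 <= sgn p *
     (eu (prof p (sigma_of g p (Q i.+1)) (tau i)).1 (prof p (sigma_of g p (Q i.+1)) (tau i)).2 g
      - eu (prof p (sigma_of g p (Q i)) (tau i)).1 (prof p (sigma_of g p (Q i)) (tau i)).2 g).
Proof.
move=> Hwf HQ0 HQ.
rewrite (PD_top _ _ _ _ Hwf) big_seq; apply: sumr_ge0 => J HJ.
have Hn := arity_pos Hwf HJ.
set n := arity g p J in Hn *.
set qq := fun i a => Q i J a.
set vv := fun i a => cfv g p (prof p (sigma_of g p (Q i)) (tau i)).1
                             (prof p (sigma_of g p (Q i)) (tau i)).2 J a.
have Hq0 : forall a, qq 0%N a = 0 by move=> a; exact: HQ0.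
have Hq : forall i a, qq i.+1 a =
    Num.max (qq i a + vv i a - \sum_(b < n) rm n (qq i) b * vv i b) 0.
  by move=> i' a; rewrite /qq HQ.
apply: mulr_ge0.
  have HH := @rho_LJ R g p (sigma_of g p (Q i.+1)) J Hwf (sigma_valid _ Hwf).
  by move: HH => /andP [].

have [_ Hs1] := sigma_valid (Q i.+1) Hwf (Ls_infosets HJ).
rewrite diff_rr //.
exact: (improve Hn Hq0 Hq i).
Qed.

Lemma sum_iota_map (m T : nat) (f : nat -> R * strat R) (F : R * strat R -> R) :
  \sum_(w <- [seq f i | i <- iota m T]) F w = \sum_(i < T) F (f (m + i)%N).
Proof.
rewrite big_map (big_nth 0%N) size_iota big_mkord.
by apply: eq_bigr => i _; rewrite nth_iota.
Qed.

End Final.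

Unset Implicit Arguments.

Theorem theorem4 (R : realType) (g : tree R) (t : nat) :
  wf_game g -> (1 <= t)%N ->
  expl_mix g (avg1 g t) (avg2 g t)
    <= 2 * (size (infosets g))%:R * util_range g
       * Num.sqrt ((max_actions g)%:R / t%:R).
Proof.
move=> Hwf Ht.
set N : R := t%:R ^+ 2 + t%:R.
have HN : 0 < N by rewrite /N ltr_pwDr ?ltr0n // exprn_ge0 ?ler0n.
set B := t%:R * (util_range g * Num.sqrt ((max_actions g)%:R * t%:R)).
set C := \sum_(i < t) i.+1%:R * eu (sigma1 g i.+1) (sigma2 g i) g.
have HQ1 : forall i, (cfr_plus g i.+1).1 = cfr_update g true (cfr_plus g i).1
    (prof true (sigma_of g true (cfr_plus g i).1) (sigma2 g i)).1
    (prof true (sigma_of g true (cfr_plus g i).1) (sigma2 g i)).2 by [].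
have HQ2 : forall i, (cfr_plus g i.+1).2 = cfr_update g false (cfr_plus g i).2
    (prof false (sigma_of g false (cfr_plus g i).2) (sigma1 g i.+1)).1
    (prof false (sigma_of g false (cfr_plus g i).2) (sigma1 g i.+1)).2 by [].
have HA : forall s, valid_strat g true s ->
    \sum_(w <- avg2 g t) w.1 * eu s w.2 g <= 2 / N * ((size (Ls g true))%:R * B + C).
  move=> s Hs.
  rewrite /avg2 sum_iota_map.
  have -> : \sum_(i < t) ((2 * (0 + i).+1%:R) / (t%:R ^+ 2 + t%:R) : R, sigma2 g (0 + i)).1 *
              eu s ((2 * (0 + i).+1%:R) / (t%:R ^+ 2 + t%:R) : R, sigma2 g (0 + i)).2 g
          = 2 / N * \sum_(i < t) (i.+1%:R * eu s (sigma2 g i) g).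
    by rewrite mulr_sumr; apply: eq_bigr => i _; rewrite /= add0n -/N; ring.
  apply: ler_wpM2l; first by rewrite divr_ge0 ?ltW.
  have Hreg : \sum_(i < t) i.+1%:R * (1 * (eu s (sigma2 g i) g
                   - eu (sigma1 g i) (sigma2 g i) g)) <= (size (Ls g true))%:R * B :=
    regret_player (p := true) (Q := fun i => (cfr_plus g i).1)
     (tau := fun i => sigma2 g i) (s := s) t Hwf (fun _ _ => erefl) HQ1
     (fun i => sigma_valid _ Hwf) Hs.
  have Himp : forall i : 'I_t, 0 <= i.+1%:R * (1 * (eu (sigma1 g i.+1) (sigma2 g i) g
                                      - eu (sigma1 g i) (sigma2 g i) g)).
    move=> i; apply: mulr_ge0; first by rewrite ler0n.
    exact: (improve_step (p := true) (Q := fun i => (cfr_plus g i).1)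
        (tau := fun i => sigma2 g i) i Hwf (fun _ _ => erefl) HQ1).
  have E : \sum_(i < t) i.+1%:R * eu s (sigma2 g i) g =
     \sum_(i < t) i.+1%:R * (1 * (eu s (sigma2 g i) g - eu (sigma1 g i) (sigma2 g i) g))
     - \sum_(i < t) i.+1%:R * (1 * (eu (sigma1 g i.+1) (sigma2 g i) g
                                      - eu (sigma1 g i) (sigma2 g i) g)) + C.
    by rewrite /C -sumrB -big_split; apply: eq_bigr => i _ /=; ring.
  rewrite E.
  have H2 : 0 <= \sum_(i < t) i.+1%:R * (1 * (eu (sigma1 g i.+1) (sigma2 g i) g
                                      - eu (sigma1 g i) (sigma2 g i) g)).
    by apply: sumr_ge0 => i _; apply: Himp.
  lra.
have HB : forall s, valid_strat g false s ->
    \sum_(w <- avg1 g t) w.1 * - eu w.2 s g <= 2 / N * ((size (Ls g false))%:R * B - C).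
  move=> s Hs.
  rewrite /avg1 sum_iota_map.
  have -> : \sum_(i < t) ((2 * (1 + i)%:R) / (t%:R ^+ 2 + t%:R) : R, sigma1 g (1 + i)).1 *
              - eu ((2 * (1 + i)%:R) / (t%:R ^+ 2 + t%:R) : R, sigma1 g (1 + i)).2 s g
          = 2 / N * \sum_(i < t) (i.+1%:R * - eu (sigma1 g i.+1) s g).
    by rewrite mulr_sumr; apply: eq_bigr => i _; rewrite /= add1n -/N; ring.
  apply: ler_wpM2l; first by rewrite divr_ge0 ?ltW.
  have Hreg : \sum_(i < t) i.+1%:R * (-1 * (eu (sigma1 g i.+1) s g
                   - eu (sigma1 g i.+1) (sigma2 g i) g)) <= (size (Ls g false))%:R * B :=
    regret_player (p := false) (Q := fun i => (cfr_plus g i).2)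
     (tau := fun i => sigma1 g i.+1) (s := s) t Hwf (fun _ _ => erefl) HQ2
     (fun i => sigma_valid _ Hwf) Hs.
  have E : \sum_(i < t) i.+1%:R * - eu (sigma1 g i.+1) s g =
     \sum_(i < t) i.+1%:R * (-1 * (eu (sigma1 g i.+1) s g
                   - eu (sigma1 g i.+1) (sigma2 g i) g)) - C.
    by rewrite /C -sumrB; apply: eq_bigr => i _ /=; ring.
  rewrite E.
  lra.
have Hsup1 : sup [set x : R | exists s, valid_strat g true s /\
                     x = \sum_(w <- avg2 g t) w.1 * eu s w.2 g]
             <= 2 / N * ((size (Ls g true))%:R * B + C).
  apply: ge_sup.
    exists (\sum_(w <- avg2 g t) w.1 * eu (sigma1 g 0) w.2 g).
    by exists (sigma1 g 0); split => //; apply: sigma_valid.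
  by move=> x [s [Hs ->]]; apply: HA.
have Hsup2 : sup [set x : R | exists s, valid_strat g false s /\
                     x = \sum_(w <- avg1 g t) w.1 * - eu w.2 s g]
             <= 2 / N * ((size (Ls g false))%:R * B - C).
  apply: ge_sup.
    exists (\sum_(w <- avg1 g t) w.1 * - eu w.2 (sigma2 g 0) g).
    by exists (sigma2 g 0); split => //; apply: sigma_valid.
  by move=> x [s [Hs ->]]; apply: HB.
rewrite /expl_mix; apply: le_trans (lerD Hsup1 Hsup2) _.
have -> : 2 / N * ((size (Ls g true))%:R * B + C) + 2 / N * ((size (Ls g false))%:R * B - C)
        = 2 / N * ((size (infosets g))%:R * B).
  by rewrite -Ls_size natrD; ring.
have Htp : 0 < t%:R :> R by rewrite ltr0n.
set S := Num.sqrt ((max_actions g)%:R / t%:R).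
have HS : 0 <= S by apply: sqrtr_ge0.
have Esq : Num.sqrt ((max_actions g)%:R * t%:R) = t%:R * S.
  have -> : (max_actions g)%:R * t%:R = (max_actions g)%:R / t%:R * t%:R ^+ 2 :> R.
    by field; rewrite gt_eqF.
  by rewrite sqrtrM ?divr_ge0 ?ler0n // sqrtr_sqr ger0_norm ?ler0n // mulrC.
have Hl := util_range_ge0 g.
rewrite /B Esq.
have -> : 2 / N * ((size (infosets g))%:R * (t%:R * (util_range g * (t%:R * S))))
    = (2 * (size (infosets g))%:R * util_range g * S) * (t%:R ^+ 2 / N) by ring.
rewrite -[X in _ <= X]mulr1; apply: ler_wpM2l.
  by rewrite !mulr_ge0 ?ler0n.
by rewrite ler_pdivrMr // mul1r /N lerDl ler0n.
Qed.
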